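(* For every $k\in\mathbb{N}$ and $w\in\mathbb{W}_k$, the bridge $(U_0^w,\dots,U_k^w)$ from the empty word to $w$ satisfies, for all $0\le m\le k-1$, $v\in\mathbb{W}_{m+1}$ (with $\mathbb{P}\{U_{m+1}^w=v\}>0$) and $u\in\mathbb{W}_m$, \[ \mathbb{P}\{U_m^{w} = u \mid U_{m+1}^{w} = v\} = \frac{\binom{v}{u}}{(m+1)^2}. \] In particular the backward transition dynamics of all bridges from the empty word are the same and consist of removing, at each step, one letter $a$ and one letter $b$ chosen uniformly at random (independently) from the current word.
   Context: For $n \in \mathbb{N}_0$, $\mathbb{W}_n$ denotes the set of words over the alphabet $\{a,b\}$ with exactly $n$ letters $a$ and $n$ letters $b$, and $\mathbb{W} := \bigsqcup_{n} \mathbb{W}_n$. For words $w,v$, $\binom{w}{v}$ denotes the number of occurrences of $v$ as a (not necessarily contiguous) sub-word of $w$. The Markov chain $(U_n)_{n\in\mathbb{N}_0}$ on $\mathbb{W}$ starts at the empty word; given $U_n \in \mathbb{W}_n$, first a letter $a$ is inserted uniformly at random into one of the $2n+1$ slots of $U_n$, then a letter $b$ is inserted uniformly at random into one of the $2n+2$ slots of the resulting word, giving $U_{n+1}$. For $w\in\mathbb{W}_k$, the bridge $(U_0^w,\dots,U_k^w)$ is the process $(U_0,\dots,U_k)$ conditioned on the event $\{U_k=w\}$. *)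

(* Defs.v *)
From mathcomp Require Import all_boot all_order all_algebra.
Set Implicit Arguments. Unset Strict Implicit. Unset Printing Implicit Defensive.
Import Order.TTheory GRing.Theory Num.Theory.

Definition letter_a : bool := true.
Definition letter_b : bool := false.

Definition inW (n : nat) (s : seq bool) : bool :=
  (count (pred1 letter_a) s == n) && (count (pred1 letter_b) s == n).

(* binom v u : number of occurrences of u as a (not necessarily contiguous)
   subword of v, i.e. number of selection masks picking u out of v. *)
Definition subword_count (v u : seq bool) : nat :=
  #|[set m : (size v).-tuple bool | mask m v == u]|.

Definition ins (x : bool) (i : nat) (s : seq bool) : seq bool :=
  take i s ++ x :: drop i s.

(* Sample space for (U_0,...,U_k): at step n < k a slot for a (in 0..2n)
   and a slot for b (in 0..2n+1) are chosen; outcomes are encoded as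
   finite functions, restricted to the valid ones, with uniform measure. *)
Definition Omega (k : nat) := {ffun 'I_k -> 'I_(2 * k) * 'I_(2 * k)}.

Definition valid (k : nat) (c : Omega k) : bool :=
  [forall n : 'I_k, ((c n).1 <= 2 * n) && ((c n).2 <= 2 * n + 1)].

Definition choice_at (k : nat) (c : Omega k) (n : nat) : nat * nat :=
  match @insub nat (fun j => j < k) _ n with
  | Some i => (val (c i).1, val (c i).2)
  | None => (0, 0)
  end.

Fixpoint U (k : nat) (c : Omega k) (n : nat) : seq bool :=
  match n with
  | 0 => [::]
  | n'.+1 => ins letter_b (choice_at c n').2
                 (ins letter_a (choice_at c n').1 (U c n'))
  end.

Definition Prob (k : nat) (E : pred (Omega k)) : rat :=
  (#|[set c : Omega k | valid c && E c]|%:R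
     / #|[set c : Omega k | valid c]|%:R)%R.

Definition CondProb (k : nat) (E F : pred (Omega k)) : rat :=
  (Prob (fun c => E c && F c) / Prob F)%R.

(* Main.v *)
Require Import Defs.
From mathcomp Require Import all_boot all_order all_algebra.
From mathcomp Require Import zify ring.
Import GRing.Theory Num.Theory.
Set Implicit Arguments. Unset Strict Implicit.

Lemma sumnMr (I : Type) (r : seq I) (P : pred I) (F : I -> nat) a :
  \sum_(i <- r | P i) (F i * a) = (\sum_(i <- r | P i) F i) * a.
Proof. elim: r => [|x r IH]; rewrite ?big_nil // !big_cons IH; case: (P x) => //; by rewrite mulnDl. Qed.
Lemma sumnMl (I : Type) (r : seq I) (P : pred I) (F : I -> nat) a :
  \sum_(i <- r | P i) (a * F i) = a * (\sum_(i <- r | P i) F i).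
Proof. elim: r => [|x r IH]; rewrite ?big_nil ?muln0 // !big_cons IH; case: (P x) => //; by rewrite mulnDr. Qed.

Definition step (x : seq bool) (p : nat * nat) := ins letter_b p.2 (ins letter_a p.1 x).
Definition del (i : nat) (s : seq bool) := take i s ++ drop i.+1 s.
Definition compat (v : seq bool) (p : nat * nat) :=
  [&& p.2 < size v, nth false v p.2 == false, p.1 < size (del p.2 v)
    & nth false (del p.2 v) p.1 == true].
Definition pred2 (v : seq bool) (p : nat * nat) := del p.1 (del p.2 v).

Lemma size_ins (x : bool) i s : size (ins x i s) = (size s).+1.
Proof.
rewrite /ins size_cat /= size_take size_drop.
case: ltnP => h; lia.
Qed.

Lemma size_del i s : i < size s -> size (del i s) = (size s).-1.
Proof.
move=> h; rewrite /del size_cat size_take size_drop h; lia.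
Qed.

Lemma del_ins (x : bool) i s : i <= size s -> del i (ins x i s) = s.
Proof.
move=> h; rewrite /del /ins take_size_cat ?size_takel //.
rewrite drop_cat size_takel // ltnNge leqnSn /= subSn // subnn /= drop0.
by rewrite cat_take_drop.
Qed.

Lemma nth_ins_eq (x : bool) i s : i <= size s -> nth false (ins x i s) i = x.
Proof. by move=> h; rewrite /ins nth_cat size_takel // ltnn subnn. Qed.

Lemma ins_del i s : i < size s -> ins (nth false s i) i (del i s) = s.
Proof.
move=> h; have h' := size_takel (ltnW h).
rewrite /ins /del take_size_cat // drop_size_cat // -(drop_nth false h).
by rewrite cat_take_drop.
Qed.

Lemma ins_eqE (a : bool) i x y : i <= size x ->
  (ins a i x == y) = [&& i < size y, nth false y i == a & del i y == x].
Proof.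
move=> h; apply/eqP/and3P.
  move=> <-; split; first by rewrite size_ins ltnS.
  - by rewrite nth_ins_eq.
  - by rewrite del_ins.
case=> h1 /eqP h2 /eqP h3; rewrite -h3 -h2; exact: ins_del.
Qed.

Lemma step_eqE x p v : p.1 <= size x -> p.2 <= (size x).+1 ->
  (step x p == v) = compat v p && (pred2 v p == x).
Proof.
case: p => i j /= hi hj; rewrite /step /compat /pred2 /=.
rewrite ins_eqE ?size_ins //.
case: (j < size v) => //=; case: (nth false v j == letter_b) => //=.
by rewrite eq_sym ins_eqE // andbA.
Qed.

Lemma count_del (P : pred bool) j s : j < size s ->
  count P s = P (nth false s j) + count P (del j s).
Proof.
move=> h; have h' := size_takel (ltnW h).
rewrite -{1}(@ins_del _ _ h) /ins /del take_size_cat // drop_size_cat //.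
rewrite !count_cat /=; lia.
Qed.
Lemma size_count (s : seq bool) : size s = count (pred1 true) s + count (pred1 false) s.
Proof. elim: s => // -[] s IH /=; rewrite IH /eq_op /=; lia. Qed.
Lemma sum_nth_eq (s : seq bool) x :
  \sum_(i < size s) (nth false s i == x) = count (pred1 x) s.
Proof.
elim: s => [|y s IH]; first by rewrite big_ord0.
rewrite /= big_ord_recl /=. rewrite IH. done.
Qed.
Definition Pn (n : nat) : seq (nat * nat) := locked
  [seq (i, j) | i <- index_iota 0 (2 * n).+1, j <- index_iota 0 (2 * n).+2].

Fixpoint Suf (s n : nat) : seq (seq (nat * nat)) :=
  match n with
  | 0 => [:: [::]]
  | n'.+1 => [seq p :: l | p <- Pn s, l <- Suf s.+1 n']
  end.

Definition run (x : seq bool) (l : seq (nat * nat)) := foldl step x l.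
Definition build l := run [::] l.

Lemma memPn p s : (p \in Pn s) = (p.1 <= 2 * s) && (p.2 <= (2 * s).+1).
Proof.
case: p => i j; rewrite /Pn -lock; apply/allpairsP/andP => /=.
  by case=> -[a b] /= [ha hb [-> ->]]; rewrite !mem_index_iota in ha hb; lia.
by case=> ha hb; exists (i, j); rewrite !mem_index_iota; split => //; lia.
Qed.

Fixpoint okl (s : nat) (l : seq (nat * nat)) : bool :=
  if l is p :: l' then (p \in Pn s) && okl s.+1 l' else true.

Lemma memSuf s n l : (l \in Suf s n) = (size l == n) && okl s l.
Proof.
elim: n s l => [|n IH] s l /=.
  by rewrite inE; case: l.
apply/allpairsP/idP.
  by case=> -[p l'] /= [hp hl ->]; rewrite /= hp /=; move: hl; rewrite IH.
case: l => // p l' /= /andP [hn /andP [hp ho]].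
by exists (p, l'); split => //; rewrite IH ho andbT.
Qed.

Lemma uniq_Pn s : uniq (Pn s).
Proof.
rewrite /Pn -lock; apply: allpairs_uniq; try exact: iota_uniq.
by case=> [a b] [c d] _ _ /= [-> ->].
Qed.

Lemma uniq_Suf s n : uniq (Suf s n).
Proof.
elim: n s => [|n IH] s //=.
apply: allpairs_uniq => //; first exact: uniq_Pn.
by case=> [a b] [c d] _ _ /= [-> ->].
Qed.

Lemma size_step x p : size (step x p) = (size x).+2.
Proof. by rewrite /step !size_ins. Qed.

Lemma size_run x l : size (run x l) = size x + 2 * size l.
Proof.
elim: l x => [|p l IH] x /=; first by rewrite addn0.
rewrite /run /= -/(run _ _) IH size_step; lia.
Qed.

Lemma big_Suf_split (F : seq (nat * nat) -> nat) s a b :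
  \sum_(l <- Suf s (a + b)) F l =
  \sum_(l1 <- Suf s a) \sum_(l2 <- Suf (s + a) b) F (l1 ++ l2).
Proof.
elim: a s F => [|a IH] s F.
  by rewrite /= big_seq1 addn0.
rewrite addSn /= !big_allpairs_dep.
apply: eq_bigr => p _; rewrite IH.
by apply: eq_bigr => l1 _; rewrite addSnnS.
Qed.

Lemma big_Suf1 (F : seq (nat * nat) -> nat) s :
  \sum_(l <- Suf s 1) F l = \sum_(p <- Pn s) F [:: p].
Proof.
change (Suf s 1) with [seq p :: l | p <- Pn s, l <- [:: [::] : seq (nat * nat)]].
by rewrite big_allpairs_dep; apply: eq_bigr => p _; rewrite big_seq1.
Qed.
Lemma inWP n x : inW n x -> count (pred1 true) x = n /\ count (pred1 false) x = n.
Proof. by case/andP => /eqP -> /eqP ->. Qed.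

Lemma inW_size n x : inW n x -> size x = 2 * n.
Proof. by case/inWP => h1 h2; rewrite size_count h1 h2; lia. Qed.

Lemma compat_count n v : inW n.+1 v -> \sum_(p <- Pn n) compat v p = n.+1 * n.+1.
Proof.
move=> hv; have [ca cb] := inWP hv; have sv : size v = (2 * n).+2 by rewrite (inW_size hv); lia.
rewrite /Pn -lock big_allpairs exchange_big /= big_mkord.
rewrite (eq_bigr (fun j : 'I_(2 * n).+2 => (nth false v j == false) * n.+1)).
  rewrite sumnMr; congr (_ * _).
  by rewrite -cb -sum_nth_eq sv.
move=> j _; rewrite big_mkord.
have hj : (j : nat) < size v by rewrite sv.
have hs : size (del j v) = (2 * n).+1 by rewrite size_del // sv.
rewrite (eq_bigr (fun i : 'I_(2 * n).+1 => (nth false v j == false) * (nth false (del j v) i == true))).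
  rewrite sumnMl; case: eqP => hb //=.
  rewrite mul1n (_ : \sum_(i < (2 * n).+1) _ = count (pred1 true) (del j v)).
    by move: ca; rewrite (count_del _ hj) hb mul1n /eq_op /= add0n.
  by rewrite -sum_nth_eq hs.
move=> i _; rewrite /compat /= hj hs ltn_ord /=.
by case: (_ == false); case: (_ == true).
Qed.
Lemma pred2_inW n v p : inW n.+1 v -> compat v p -> inW n (pred2 v p).
Proof.
case: p => i j hv /and4P [hj /eqP hb hi /eqP ha]; have [ca cb] := inWP hv.
rewrite /inW /pred2 /letter_a /letter_b /=.
move: ca cb; rewrite !(count_del _ hj) !(count_del _ hi) hb ha /eq_op /= => h1 h2.
by apply/andP; split; apply/eqP; lia.
Qed.

Lemma size_build l n : l \in Suf 0 n -> size (build l) = 2 * n.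
Proof. by rewrite memSuf /build size_run => /andP [/eqP -> _]. Qed.

Lemma build_rcons l p : build (rcons l p) = step (build l) p.
Proof. by rewrite /build /run foldl_rcons. Qed.

Definition Aw n x := \sum_(l <- Suf 0 n) (build l == x).

Lemma stepsum n v : (forall x, inW n x -> Aw n x = (n`!)^2) -> inW n.+1 v ->
  \sum_(l1 <- Suf 0 n) \sum_(p <- Pn n) (step (build l1) p == v)
  = (n`!)^2 * (n.+1 * n.+1).
Proof.
move=> IH hv.
rewrite big_seq (eq_bigr (fun l1 => \sum_(p <- Pn n | p \in Pn n)
   (compat v p * (build l1 == pred2 v p)))); last first.
  move=> l1 hl1; rewrite big_seq; apply: eq_bigr => p hp.
  move: hp; rewrite memPn => /andP [h1 h2].
  have hs := size_build hl1.
  by rewrite step_eqE ?hs // eq_sym mulnb.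
rewrite exchange_big /= -(compat_count hv) -sumnMl big_seq.
apply: eq_bigr => p hp; rewrite sumnMl -big_seq -/(Aw n _).
case hc: (compat v p); last by rewrite !mul0n muln0.
by rewrite IH ?mul1n ?muln1 // (pred2_inW hv hc).
Qed.

Lemma Aw_unif n x : inW n x -> Aw n x = (n`!)^2.
Proof.
elim: n x => [|n IH] x hx; rewrite /Aw.
  have := inW_size hx; rewrite muln0 => /size0nil ->.
  by rewrite /= big_seq1.
have -> : Suf 0 n.+1 = Suf 0 (n + 1) by rewrite addn1.
rewrite big_Suf_split add0n.
rewrite (eq_bigr (fun l1 => \sum_(p <- Pn n) (step (build l1) p == x))).
  rewrite stepsum // factS expnMn mulnC; lia.
by move=> l1 _; rewrite big_Suf1; apply: eq_bigr => p _; rewrite cats1 build_rcons.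
Qed.
Definition gm n i j := ins false j (ins false i (nseq n.-2 true)).

Lemma mask_ins (T Y : seq bool) x j : size T = size Y ->
  mask (ins false j T) (ins x j Y) = mask T Y.
Proof.
move=> h; rewrite /ins mask_cat ?size_take ?h //= -mask_cat ?size_take ?h //.
by rewrite !cat_take_drop.
Qed.

Lemma mask_ins_del (T v : seq bool) j : j < size v -> size T = (size v).-1 ->
  mask (ins false j T) v = mask T (del j v).
Proof.
move=> h hT; rewrite -{1}(ins_del h) mask_ins //.
by rewrite size_del.
Qed.

Lemma mask_gm v i j : compat v (i, j) -> mask (gm (size v) i j) v = pred2 v (i, j).
Proof.
case/and4P => /= hj _ hi _.
have hs : size (del j v) = (size v).-1 by rewrite size_del.
rewrite /gm mask_ins_del //; last by rewrite size_ins size_nseq -hs (ltn_predK hi).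
rewrite /pred2 /= mask_ins_del //; last by rewrite size_nseq hs.
by rewrite mask_true // size_del // hs.
Qed.

Lemma size_gm n i j : 2 <= n -> size (gm n i j) = n.
Proof. by move=> h; rewrite /gm !size_ins size_nseq; lia. Qed.

Lemma nth_ins (x : bool) j X t : j <= size X ->
  nth false (ins x j X) t = if t < j then nth false X t else if t == j then x else nth false X t.-1.
Proof.
move=> h; rewrite /ins nth_cat size_takel //.
case: ltnP => h1; first by rewrite nth_take.
case: eqP => [->|h2]; first by rewrite subnn.
have -> : t - j = (t - j).-1.+1 by lia.
by rewrite /= nth_drop; congr nth; lia.
Qed.

Lemma index_ins_false i k : i <= k -> index false (ins false i (nseq k true)) = i.
Proof.
move=> h; rewrite /ins index_cat.
have -> : (false \in take i (nseq k true)) = false.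
  by apply/negbTE/negP => /mem_take; rewrite mem_nseq; case: (0 < k).
by rewrite /= size_takel ?size_nseq // addn0.
Qed.

Lemma gm_false v i j t : compat v (i, j) -> t < size v ->
  nth false (gm (size v) i j) t = false -> nth false v t = false -> t = j.
Proof.
move=> hc; have := hc; case/and4P => /= hj _ hi /eqP ha ht.
have hs : size (del j v) = (size v).-1 by rewrite size_del.
rewrite hs in hi.
rewrite /gm -{2}(ins_del hj) !nth_ins.
all: try (rewrite ?hs ?size_ins ?size_nseq; lia).
rewrite !nth_nseq.
case: (ltngtP t j) => htj //.
  case: (ltngtP t i) => hti.
  - by case: ifP => //; lia.
  - by case: ifP => //; lia.
  - by rewrite hti ha.
case: (ltngtP t.-1 i) => hti.
- by case: ifP => //; lia.
- by case: ifP => //; lia.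
- by rewrite hti ha.
Qed.

Lemma gm_inj v i j i' j' : compat v (i, j) -> compat v (i', j') ->
  gm (size v) i j = gm (size v) i' j' -> i = i' /\ j = j'.
Proof.
move=> hc hc' he.
have := hc'; case/and4P => /= hj' /eqP hb' hi' _.
have := hc; case/and4P => /= hj _ hi _.
have ej : j' = j.
  apply: (gm_false hc hj' _ hb'); rewrite he /gm nth_ins_eq //.
  by rewrite size_ins size_nseq size_del // in hi' *; lia.
subst j'; split => //.
move: he; rewrite /gm => /(congr1 (del j)).
rewrite !del_ins ?size_ins ?size_nseq; try (rewrite size_del // in hi hi'; lia).
move/(congr1 (index false)); rewrite !index_ins_false //;
  rewrite size_del // in hi hi'; lia.
Qed.
Lemma count_mask_split (P : pred bool) (T v : seq bool) : size T = size v ->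
  count P (mask T v) + count P (mask (map negb T) v) = count P v.
Proof.
elim: v T => [|x v IH] [|y T] //= [hs].
by case: y => /=; rewrite -(IH _ hs); lia.
Qed.

Lemma all_true_nseq (T : seq bool) : count id T = size T -> T = nseq (size T) true.
Proof.
move=> h; apply/all_pred1P; rewrite all_count.
by rewrite (eq_count (a2 := id)) ?h // => b; case: b.
Qed.

Lemma surj1 x (v T : seq bool) : size T = size v -> count id T + 1 = size v ->
  count (pred1 x) (mask (map negb T) v) = 1 ->
  exists q, [/\ q < size v, nth false v q = x & T = ins false q (nseq (size v).-1 true)].
Proof.
elim: v T => [|z v IH] [|y T] //= [hs].
case: y => /= hc hm.
  have [q [hq hn ->]] := IH T hs ltac:(lia) hm.
  exists q.+1; split => //.
  by case: (size v) hq => // n _ /=; rewrite /ins.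
have hT : count id T = size T by lia.
have eT : T = nseq (size v) true by rewrite {1}(all_true_nseq hT) hs.
move: hm; rewrite eT map_nseq mask_false /=; case: eqP => // hz _.
by exists 0; rewrite /ins take0 drop0; split.
Qed.

Lemma surj2 (v T : seq bool) : size T = size v -> count id T + 2 = size v ->
  count (pred1 true) (mask (map negb T) v) = 1 ->
  count (pred1 false) (mask (map negb T) v) = 1 ->
  exists i j, compat v (i, j) /\ T = gm (size v) i j.
Proof.
elim: v T => [|z v IH] [|y T] //= [hs].
case: y => /= hc ha hb.
  have [i [j [hcomp ->]]] := IH T hs ltac:(lia) ha hb.
  exists i.+1, j.+1; split.
    move: hcomp; rewrite /compat /del /=.
    by rewrite !ltnS.
  have h2 : 2 <= size v by lia.
  by rewrite /gm; case: (size v) h2 => // -[|n] //= _.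
case: z ha hb; rewrite /eq_op /= => ha hb.
- have h1 : count id T + 1 = size v by lia.
  have h2 : count (pred1 false) (mask (map negb T) v) = 1 by move: hb; rewrite add0n.
  have [q [hq hn ->]] := surj1 hs h1 h2.
  exists 0, q.+1; split.
    by rewrite /compat /del /= ?take0 ?drop0 ?ltnS hq hn.
  by rewrite /gm /ins /= ?take0 ?drop0.
- have h1 : count id T + 1 = size v by lia.
  have h2 : count (pred1 true) (mask (map negb T) v) = 1 by move: ha; rewrite add0n.
  have [q [hq hn ->]] := surj1 hs h1 h2.
  exists q, 0; split.
    by rewrite /compat /del /= ?take0 ?drop0 ?ltnS hq hn.
  by rewrite /gm /ins /= ?take0 ?drop0.
Qed.
Lemma Bw_subword m u v : inW m u -> inW m.+1 v ->
  \sum_(p <- Pn m) (step u p == v) = subword_count v u.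
Proof.
move=> hu hv; have su := inW_size hu.
have sv : size v = (2 * m).+2 by rewrite (inW_size hv); lia.
have [cau cbu] := inWP hu; have [cav cbv] := inWP hv.
rewrite big_seq (eq_bigr (fun p => nat_of_bool (compat v p && (pred2 v p == u)))); last first.
  move=> p; rewrite memPn => /andP [h1 h2]; by rewrite step_eqE ?su.
rewrite -big_seq /Pn -lock big_allpairs big_mkord.
rewrite (eq_bigr (fun i : 'I_(2 * m).+1 => \sum_(j < (2 * m).+2)
   nat_of_bool (compat v (i : nat, j : nat) && (pred2 v (i : nat, j : nat) == u)))); last first.
  by move=> i _; rewrite big_mkord.
rewrite pair_bigA /=.
set A := [set p : 'I_(2 * m).+1 * 'I_(2 * m).+2 |
   compat v (p.1 : nat, p.2 : nat) && (pred2 v (p.1 : nat, p.2 : nat) == u)].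
have -> : \sum_(p : 'I_(2 * m).+1 * 'I_(2 * m).+2)
   nat_of_bool (compat v (p.1 : nat, p.2 : nat) && (pred2 v (p.1 : nat, p.2 : nat) == u)) = #|A|.
  rewrite -sum1_card [RHS]big_mkcond /=; apply: eq_bigr => p _.
  by rewrite inE; case: (_ && _).
pose d := [tuple of nseq (size v) true].
pose G (p : 'I_(2 * m).+1 * 'I_(2 * m).+2) : (size v).-tuple bool :=
  insubd d (gm (size v) p.1 p.2).
have h2 : 2 <= size v by rewrite sv.
have valG p : val (G p) = gm (size v) p.1 p.2.
  by rewrite /G val_insubd size_gm // eqxx.
rewrite /subword_count.
have -> : [set T : (size v).-tuple bool | mask T v == u] = [set G p | p in A].
  apply/setP => T; rewrite inE; apply/idP/imsetP.
    move=> /eqP hT.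
    have hsT : size T = size v by rewrite size_tuple.
    have hc : count id T + 2 = size v.
      by rewrite -(size_mask hsT) hT su sv; lia.
    have ha : count (pred1 true) (mask (map negb T) v) = 1.
      by have := count_mask_split (pred1 true) hsT; rewrite hT cau cav -[m.+1]addn1 => /eqP; rewrite eqn_add2l => /eqP.
    have hb : count (pred1 false) (mask (map negb T) v) = 1.
      by have := count_mask_split (pred1 false) hsT; rewrite hT cbu cbv -[m.+1]addn1 => /eqP; rewrite eqn_add2l => /eqP.
    have [i [j [hcomp hTe]]] := surj2 hsT hc ha hb.
    have := hcomp; case/and4P => /= hj _ hi _.
    have hi' : i < (2 * m).+1 by rewrite size_del // sv in hi.
    have hj' : j < (2 * m).+2 by rewrite -sv.
    exists (Ordinal hi', Ordinal hj').
      by rewrite inE /= hcomp /= -mask_gm // -hTe hT.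
    by apply: val_inj; rewrite valG /= -hTe.
  case=> p; rewrite inE => /andP [hc /eqP hp] ->.
  by rewrite valG -hp; case: p hc {hp} => [i j] /= hc; rewrite mask_gm.
rewrite card_in_imset //.
move=> p q; rewrite !inE => /andP [hp _] /andP [hq _] /(congr1 val).
rewrite !valG; case: p hp => [i j] hp; case: q hq => [i' j'] hq /= e.
have [e1 e2] := gm_inj hp hq e.
by congr pair; apply: val_inj.
Qed.

Lemma oklP s l : okl s l = [forall t : 'I_(size l), nth (0, 0) l t \in Pn (s + t)].
Proof.
elim: l s => [|p l IH] s /=; first by apply/esym/forallP => -[].
rewrite IH; apply/andP/forallP.
  case=> hp /forallP hl t; case: t => -[|t] ht /=; first by rewrite addn0.
  have := hl (Ordinal (ht : t < size l)); by rewrite /= addSnnS.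
move=> h; split; first by have := h (Ordinal (ltn0Sn (size l))); rewrite /= addn0.
apply/forallP => -[t ht]; have := h (Ordinal (ht : t.+1 < (size l).+1)).
by rewrite /= addSnnS.
Qed.

Section Link.
Variable k : nat.

Definition Lc (c : Omega k) : seq (nat * nat) :=
  [seq ((c i).1 : nat, (c i).2 : nat) | i <- enum 'I_k].

Lemma size_Lc c : size (Lc c) = k.
Proof. by rewrite size_map size_enum_ord. Qed.

Lemma nth_Lc c (i : 'I_k) : nth (0, 0) (Lc c) i = ((c i).1 : nat, (c i).2 : nat).
Proof. by rewrite (nth_map i) ?size_enum_ord // nth_ord_enum. Qed.

Lemma choice_atE c n : n < k -> choice_at c n = nth (0, 0) (Lc c) n.
Proof.
move=> h; rewrite /choice_at insubT /=.
by rewrite -(nth_Lc c (Ordinal h)).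
Qed.

Lemma UE c n : n <= k -> U c n = build (take n (Lc c)).
Proof.
elim: n => [|n IH] h; first by rewrite take0.
rewrite /= IH 1?ltnW // choice_atE // (take_nth (0, 0)) ?size_Lc //.
by rewrite build_rcons.
Qed.

Lemma Lc_inj : injective Lc.
Proof.
move=> c c' e; apply/ffunP => i.
have := congr1 (fun l => nth (0, 0) l i) e; rewrite /= !nth_Lc => -[e1 e2].
by rewrite [c i]surjective_pairing [c' i]surjective_pairing; congr pair; apply: val_inj.
Qed.

Lemma Lc_Suf c : valid c -> Lc c \in Suf 0 k.
Proof.
move=> /forallP hv; rewrite memSuf size_Lc eqxx /= oklP.
apply/forallP => t; have ht : (t : nat) < k by rewrite -(size_Lc c).
have := nth_Lc c (Ordinal ht); rewrite /= => ->.
by rewrite memPn /= add0n; have := hv (Ordinal ht); rewrite addn1.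
Qed.

Lemma Suf_Lc l : 0 < k -> l \in Suf 0 k -> exists2 c, valid c & Lc c = l.
Proof.
move=> hk; rewrite memSuf oklP => /andP [/eqP hs /forallP hl].
have d : 'I_(2 * k) by exists 0; lia.
pose c : Omega k := [ffun i : 'I_k => (insubd d (nth (0, 0) l i).1, insubd d (nth (0, 0) l i).2)].
have hb (i : 'I_k) : ((nth (0, 0) l i).1 <= 2 * i) && ((nth (0, 0) l i).2 <= (2 * i).+1).
  have hi : (i : nat) < size l by rewrite hs.
  by have := hl (Ordinal hi); rewrite memPn /= add0n.
exists c.
  apply/forallP => i; rewrite /c ffunE /= !val_insubd addn1.
  have /andP [h1 h2] := hb i; have := ltn_ord i.
  by case: ifP; case: ifP => /=; rewrite ?h1 ?h2 //; lia.
apply: (@eq_from_nth _ (0, 0)); rewrite size_Lc ?hs // => t ht.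
have := nth_Lc c (Ordinal ht); rewrite /= => ->.
rewrite /c ffunE /= !val_insubd.
have /andP [h1 h2] := hb (Ordinal ht).
rewrite /= in h1 h2.
case: (nth (0, 0) l t) h1 h2 => a b /= h1 h2.
have ha : a < 2 * k by lia.
have hb' : b < 2 * k by lia.
by rewrite ha hb'.
Qed.

Lemma count_sum (T : Type) (Q : pred T) s : count Q s = \sum_(x <- s) Q x.
Proof. by elim: s => [|x s IH]; rewrite ?big_nil // big_cons /= IH. Qed.

Lemma card_Omega (Q : pred (seq (nat * nat))) : 0 < k ->
  #|[set c : Omega k | valid c && Q (Lc c)]| = \sum_(l <- Suf 0 k) Q l.
Proof.
move=> hk; rewrite -count_sum.
have hp : perm_eq (map Lc (filter (fun c : Omega k => valid c) (enum (Omega k)))) (Suf 0 k).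
  apply: uniq_perm; first by rewrite (map_inj_uniq Lc_inj) filter_uniq ?enum_uniq.
    exact: uniq_Suf.
  move=> l; apply/mapP/idP.
    by case=> c; rewrite mem_filter => /andP [hv _] ->; exact: Lc_Suf.
  move=> hl; have [c hv <-] := Suf_Lc hk hl.
  by exists c; rewrite // mem_filter hv mem_enum.
rewrite -(permP hp) count_map count_filter cardsE cardE.
rewrite /enum_mem size_filter -enumT.
rewrite (@eq_filter _ _ predT) // filter_predT.
by apply: eq_count => c; rewrite /= andbC.
Qed.

End Link.

Unset Implicit Arguments.
Unset Strict Implicit.

Lemma decomp m r l1 p l2 : size l1 = m -> size l2 = r ->
 [/\ take m (l1 ++ p :: l2) = l1, take m.+1 (l1 ++ p :: l2) = rcons l1 p,
     take (m + r.+1) (l1 ++ p :: l2) = l1 ++ p :: l2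
   & build (l1 ++ p :: l2) = run (step (build l1) p) l2].
Proof.
move=> h1 h2; split.
- by rewrite take_size_cat.
- rewrite take_cat h1 ltnNge leqnSn /= subSnn -cats1; congr cat.
  by rewrite /= take0.
- by rewrite take_oversize // size_cat /= h1 h2.
- by rewrite /build /run foldl_cat.
Qed.

Lemma split3 m r (F : seq (nat * nat) -> nat) :
  \sum_(l <- Suf 0 (m + r.+1)) F l =
  \sum_(l1 <- Suf 0 m) \sum_(p <- Pn m) \sum_(l2 <- Suf m.+1 r) F (l1 ++ p :: l2).
Proof.
rewrite big_Suf_split add0n; apply: eq_bigr => l1 _.
change (Suf m r.+1) with [seq p :: l | p <- Pn m, l <- Suf m.+1 r].
by rewrite big_allpairs_dep.
Qed.

Local Open Scope ring_scope.
Lemma ratfin (a b c d e : nat) :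
  (0 : rat) < (a * e * c)%N%:R / d%:R ->
  ((a * (b * c))%N%:R / d%:R) / ((a * e * c)%N%:R / d%:R) = b%:R / e%:R :> rat.
Proof.
move=> h.
have hd : (d%:R : rat) != 0 by apply/eqP => hd; move: h; rewrite hd invr0 mulr0 Order.POrderTheory.ltxx.
have hn : ((a * e * c)%N%:R : rat) != 0 by apply/eqP => hn; move: h; rewrite hn mul0r Order.POrderTheory.ltxx.
rewrite !natrM !mulf_eq0 !negb_or in hn *.
case/andP: hn => /andP [ha he] hc.
by field; rewrite ?ha ?he ?hc ?hd.
Qed.

Theorem mainTheorem3 (k : nat) (w : seq bool) (hw : inW k w)
    (m : nat) (hm : (m <= k - 1)%N) (hk : (0 < k)%N)
    (v u : seq bool) (hv : inW m.+1 v) (hu : inW m u)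
    (hpos : (0 < Prob (fun c : Omega k => (U c m.+1 == v) && (U c k == w)))%R) :
  CondProb (fun c : Omega k => U c m == u)
           (fun c : Omega k => (U c m.+1 == v) && (U c k == w))
  = ((subword_count v u)%:R / ((m.+1 ^ 2)%N)%:R)%R.
Proof.
have [r ek] : exists r, (k = m + r.+1)%N by exists (k - m.+1)%N; lia.
pose Q1 := fun l => (build (take m l) == u) &&
   ((build (take m.+1 l) == v) && (build (take k l) == w)).
pose Q2 := fun l => (build (take m.+1 l) == v) && (build (take k l) == w).
have e1 : [set c : Omega k | valid c && ((U c m == u) && ((U c m.+1 == v) && (U c k == w)))]
   = [set c | valid c && Q1 (Lc c)].
  by apply/setP => c; rewrite !inE /Q1 !UE //; lia.
have e2 : [set c : Omega k | valid c && ((U c m.+1 == v) && (U c k == w))]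
   = [set c | valid c && Q2 (Lc c)].
  by apply/setP => c; rewrite !inE /Q2 !UE //; lia.
pose C := (\sum_(l2 <- Suf m.+1 r) (run v l2 == w))%N.
have N1 : (\sum_(l <- Suf 0 k) Q1 l = m`! ^ 2 * (subword_count v u * C))%N.
  rewrite ek split3 -(Aw_unif hu) /Aw -sumnMr big_seq [RHS]big_seq.
  apply: eq_bigr => l1 hl1.
  have s1 : size l1 = m by move: hl1; rewrite memSuf => /andP [/eqP].
  rewrite -(Bw_subword hu hv) -sumnMr -sumnMl; apply: eq_bigr => p _.
  rewrite big_seq /C [in RHS]big_seq -!sumnMl; apply: eq_bigr => l2 hl2.
  have s2 : size l2 = r by move: hl2; rewrite memSuf => /andP [/eqP].
  have [t1 t2 t3 t4] := @decomp _ _ _ p _ s1 s2.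
  rewrite /Q1 -ek in t3 *; rewrite t1 t2 t3 t4 build_rcons.
  case: eqP => [-> | _]; last by rewrite mul0n.
  case: eqP => [-> | _]; last by rewrite mul0n muln0.
  by rewrite mul1n mul1n.
have N2 : (\sum_(l <- Suf 0 k) Q2 l = m`! ^ 2 * (m.+1 * m.+1) * C)%N.
  rewrite ek split3 -(stepsum (@Aw_unif m) hv) -sumnMr big_seq [RHS]big_seq.
  apply: eq_bigr => l1 hl1.
  have s1 : size l1 = m by move: hl1; rewrite memSuf => /andP [/eqP].
  rewrite -sumnMr; apply: eq_bigr => p _.
  rewrite big_seq /C [in RHS]big_seq -!sumnMl; apply: eq_bigr => l2 hl2.
  have s2 : size l2 = r by move: hl2; rewrite memSuf => /andP [/eqP].
  have [t1 t2 t3 t4] := @decomp _ _ _ p _ s1 s2.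
  rewrite /Q2 -ek in t3 *; rewrite t2 t3 t4 build_rcons.
  case: eqP => [-> | _]; last by rewrite mul0n.
  by rewrite mul1n.
move: hpos; rewrite /CondProb /Prob /=.
rewrite e1 e2 !card_Omega // N1 N2 -mulnn.
exact: ratfin.
Qed.
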